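(* $m_4(5)\geq 6$. Specifically, let $X_0,X_1,X_2$ be pairwise disjoint copies of $\{0,1,2,3,4\}$, let $\mathcal P_j$ be the copy in $X_j$ of the pentagon $\mathcal P=\{\{i,i+1\}: i\in\mathbb Z_5\}$ and $\mathcal R_j$ the copy in $X_j$ of $\mathcal R=\{\{i,i+1,i+3\}: i\in\mathbb Z_5\}$ (indices mod 5). Let \[ \mathcal H=(\mathcal P_0\times\mathcal R_1)\cup(\mathcal P_1\times\mathcal R_2)\cup(\mathcal P_2\times\mathcal R_0), \] where $\mathcal P_a\times\mathcal R_b=\{P\cup R: P\in\mathcal P_a, R\in\mathcal R_b\}$. Then $\mathcal H$ is a $5$-uniform intersecting family with $|\mathcal H|=75$ and $|\{H\in\mathcal H: H\cap Y=\emptyset\}|\ge 6$ for every $4$-set $Y\subset X_0\cup X_1\cup X_2$; moreover $\tau(\mathcal H)=5$.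
   Context: A family is intersecting if any two members intersect; $\tau$ is the minimum size of a set meeting all members. $m_j(k)$ is the maximum of $\gamma_j(\mathcal F)=\min_{|S|=j}|\{F\in\mathcal F:F\cap S=\emptyset\}|$ over all intersecting $k$-uniform families $\mathcal F$ (on any finite ground set) with $\tau(\mathcal F)=k$. *)

(* Defs.v *)
From mathcomp Require Import all_boot.
Set Implicit Arguments. Unset Strict Implicit. Unset Printing Implicit Defensive.

Definition uniform (T : finType) (k : nat) (F : {set {set T}}) : Prop :=
  forall A, A \in F -> #|A| = k.

Definition intersecting (T : finType) (F : {set {set T}}) : Prop :=
  forall A B, A \in F -> B \in F -> A :&: B != set0.

Definition cover (T : finType) (F : {set {set T}}) (S : {set T}) : bool :=
  [forall A in F, A :&: S != set0].

(* tau F = minimum size of a set meeting all members of F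
   (default #|T| if there is no such set, which cannot happen when
   set0 \notin F). *)
Definition tau (T : finType) (F : {set {set T}}) : nat :=
  \big[minn/#|T|]_(S : {set T} | cover F S) #|S|.

Definition avoid_count (T : finType) (F : {set {set T}}) (S : {set T}) : nat :=
  #|[set A in F | [disjoint A & S]]|.

(* The construction: ground set X_0 u X_1 u X_2, element (j, i) is the
   copy of i in X_j. *)
Definition Gr := ('I_3 * 'I_5)%type.

Definition add5 (i : 'I_5) (k : nat) : 'I_5 := inord ((i + k) %% 5).
Definition add3 (j : 'I_3) (k : nat) : 'I_3 := inord ((j + k) %% 3).

Definition Pj (j : 'I_3) : {set {set Gr}} :=
  [set [set (j, i); (j, add5 i 1)] | i : 'I_5].

Definition Rj (j : 'I_3) : {set {set Gr}} :=
  [set [set (j, i); (j, add5 i 1); (j, add5 i 3)] | i : 'I_5].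

Definition prodfam (A B : {set {set Gr}}) : {set {set Gr}} :=
  [set P :|: R | P in A, R in B].

Definition Hfam : {set {set Gr}} :=
  \bigcup_(j : 'I_3) prodfam (Pj j) (Rj (add3 j 1)).

(* Main.v *)
Require Import Defs.
From mathcomp Require Import all_boot.

Definition T3 := ('I_3 * 'I_5 * 'I_5)%type.
Definition mko (n : nat) (i : nat) : 'I_n.+1 := Ordinal (ltn_pmod i (ltn0Sn n)).
Definition ords n := [seq mko n i | i <- iota 0 n.+1].
Definition a5 (i : 'I_5) (k : nat) : 'I_5 := mko 4 (i + k).
Definition a3 (i : 'I_3) (k : nat) : 'I_3 := mko 2 (i + k).
Definition fHl (t : T3) : seq Gr :=
  let j := t.1.1 in let i := t.1.2 in let i' := t.2 in let k := a3 j 1 in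
  [:: (j, i); (j, a5 i 1); (k, i'); (k, a5 i' 1); (k, a5 i' 3)].
Definition GL : seq Gr := [seq (a, b) | a <- ords 2, b <- ords 4].
Definition TL : seq T3 := [seq (a, b) | a <- GL, b <- ords 4].
Definition fH (t : T3) : {set Gr} := [set x in fHl t].

Lemma add5E i k : add5 i k = a5 i k.
Proof. by apply: val_inj; rewrite /= inordK // ltn_pmod. Qed.
Lemma add3E i k : add3 i k = a3 i k.
Proof. by apply: val_inj; rewrite /= inordK // ltn_pmod. Qed.

Lemma mem_ords n (i : 'I_n.+1) : i \in ords n.
Proof.
apply/mapP; exists (val i); first by rewrite mem_iota /= add0n ltn_ord.
by apply: val_inj; rewrite /= modn_small.
Qed.

Lemma memGL (x : Gr) : x \in GL.
Proof. by case: x => a b; apply: allpairs_f; apply: mem_ords. Qed.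

Lemma memTL (t : T3) : t \in TL.
Proof. by case: t => a b; apply: allpairs_f; [apply: memGL | apply: mem_ords]. Qed.

Lemma Hfam_eq : Hfam = [set fH t | t : T3].
Proof.
apply/setP => A; apply/bigcupP/imsetP.
- case=> j _ /imset2P [P R /imsetP [i _ ->] /imsetP [i' _ ->] ->].
  exists (j, i, i') => //; apply/setP => x.
  by rewrite /fH !inE !add5E !add3E /= !orbA.
- case=> [[[j i] i']] _ ->; exists j => //; apply/imset2P.
  exists [set (j, i); (j, add5 i 1)]
         [set (add3 j 1, i'); (add3 j 1, add5 i' 1); (add3 j 1, add5 i' 3)].
  + by apply/imsetP; exists i.
  + by apply/imsetP; exists i'.
  by apply/setP => x; rewrite /fH !inE !add5E !add3E /= !orbA.
Qed.

Lemma uniqTL : uniq TL. Proof. by vm_compute. Qed.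
Lemma uniqF : all (fun t => uniq (fHl t)) TL. Proof. by vm_compute. Qed.
Lemma interF : all (fun t => all (fun t' => has (fun x => x \in fHl t') (fHl t)) TL) TL.
Proof. by vm_compute. Qed.
Lemma injF : all (fun t => all (fun t' => (t == t') || has (fun x => x \notin fHl t') (fHl t)) TL) TL.
Proof. by vm_compute. Qed.

Lemma inFE t x : (x \in fH t) = (x \in fHl t).
Proof. by rewrite inE. Qed.

Lemma fH_inj : injective fH.
Proof.
move=> t t' e; move/allP: injF => /(_ t (memTL t)) /allP /(_ t' (memTL t')).
case/orP => [/eqP //|/hasP [x xt xnt]].
by move: xnt; rewrite -inFE -e inFE xt.
Qed.

Lemma card_fH t : #|fH t| = 5.
Proof.
rewrite cardsE; apply/card_uniqP.
by move/allP: uniqF => /(_ t (memTL t)).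
Qed.

Lemma inter_fH t t' : fH t :&: fH t' != set0.
Proof.
move/allP: interF => /(_ t (memTL t)) /allP /(_ t' (memTL t')) /hasP [x xt' xt].
by apply/set0Pn; exists x; rewrite inE !inFE xt xt'.
Qed.

From mathcomp Require Import zify.

Definition enc (x : Gr) : nat := 5 * x.1 + x.2.
Lemma enc_inj : injective enc.
Proof.
move=> [a b] [c d]; rewrite /enc /= => h; have ha := ltn_ord a; have hb := ltn_ord b.
have hc := ltn_ord c; have hd := ltn_ord d.
have e1 : (a : nat) = c by lia.
have e2 : (b : nat) = d by lia.
by congr pair; apply: val_inj.
Qed.
Lemma enc_lt x : enc x \in iota 0 15.
Proof.
case: x => a b; rewrite mem_iota /enc /=; have ha := ltn_ord a; have hb := ltn_ord b; lia.
Qed.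

Definition HL := [seq [seq enc x | x <- fHl t] | t <- TL].
Definition cntn (s : seq nat) := count (fun h => all (fun x => x \notin s) h) HL.
Definition cnt (s : seq Gr) := count (fun t => all (fun x => x \notin s) (fHl t)) TL.

Lemma bigcheck : all (fun a => all (fun b => all (fun c => all (fun d =>
   6 <= cntn [:: a;b;c;d]) (iota 0 15)) (iota 0 15)) (iota 0 15)) (iota 0 15).
Proof. by vm_compute. Qed.

Lemma cntE s : cntn (map enc s) = cnt s.
Proof.
rewrite /cntn /HL count_map; apply: eq_count => t /=; by rewrite /= !(mem_map enc_inj).
Qed.

Lemma cnt4 a b c d : 6 <= cnt [:: a; b; c; d].
Proof.
rewrite -cntE /=.
move/allP: bigcheck => /(_ _ (enc_lt a)) /allP /(_ _ (enc_lt b)) /allP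
  /(_ _ (enc_lt c)) /allP /(_ _ (enc_lt d)) //.
Qed.

Lemma cnt_le s : size s <= 4 -> 6 <= cnt s.
Proof.
move=> hs; pose s' := s ++ nseq (4 - size s) ((ord0 : 'I_3), (ord0 : 'I_5)).
have hs' : size s' = 4 by rewrite size_cat size_nseq; lia.
have h1 : cnt s' <= cnt s.
  apply: sub_count => t /allP H; apply/allP => x /H.
  by rewrite mem_cat negb_or => /andP [].
apply: leq_trans h1.
move: hs'; case: s' => [|a [|b [|c [|d [|]]]]] //= _; exact: cnt4.
Qed.

Lemma card_pred (P : pred T3) : #|[set t | P t]| = count P TL.
Proof.
have -> : [set t | P t] = [set t in filter P TL].
  by apply/setP => t; rewrite !inE mem_filter memTL andbT.
by rewrite cardsE; move/card_uniqP: (filter_uniq P uniqTL) ->; rewrite size_filter.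
Qed.

Lemma disjE t (Y : {set Gr}) :
  [disjoint fH t & Y] = all (fun x => x \notin enum Y) (fHl t).
Proof.
rewrite -setI_eq0; apply/eqP/allP.
- move=> e x xt; rewrite mem_enum; apply/negP => xY.
  have : x \in fH t :&: Y by rewrite inE inFE xt xY.
  by rewrite e inE.
- move=> H; apply/setP => x; rewrite in_setI inFE in_set0; apply/negP => /andP [xt xY].
  by move: (H x xt); rewrite mem_enum xY.
Qed.

Lemma avoidE (Y : {set Gr}) : avoid_count Hfam Y = cnt (enum Y).
Proof.
rewrite /avoid_count Hfam_eq.
have -> : [set A in [set fH t | t : T3] | [disjoint A & Y]]
          = fH @: [set t | [disjoint fH t & Y]].
  apply/setP => A; rewrite inE; apply/andP/imsetP.
  - by case=> /imsetP [t _ ->] d; exists t => //; rewrite inE.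
  - case=> t; rewrite inE => d ->; split => //; exact: imset_f.
rewrite card_imset; last exact: fH_inj.
rewrite (card_pred (fun t => [disjoint fH t & Y])).
by apply: eq_count => t; rewrite disjE.
Qed.

Lemma nocover (S : {set Gr}) : #|S| <= 4 -> ~~ Defs.cover Hfam S.
Proof.
move=> hS; apply/negP => /forallP cov.
have := cnt_le (enum S); rewrite -cardE => /(_ hS).
have : 0 < cnt (enum S) -> has (fun t => all (fun x => x \notin enum S) (fHl t)) TL.
  by rewrite has_count.
move=> h h6; have /h : 0 < cnt (enum S) by apply: leq_trans h6.
move=> /hasP [t _ ht].
move: (cov (fH t)); rewrite Hfam_eq imset_f ?inE //= setI_eq0 disjE.
by rewrite ht.
Qed.

Definition s0 : seq Gr := [:: (mko 2 0, mko 4 0); (mko 2 0, mko 4 2); (mko 2 0, mko 4 4);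
   (mko 2 2, mko 4 0); (mko 2 2, mko 4 1)].
Lemma s0_uniq : uniq s0. Proof. by vm_compute. Qed.
Lemma s0_cov : all (fun t => has (fun x => x \in s0) (fHl t)) TL.
Proof. by vm_compute. Qed.

Lemma bm (T : eqType) (r : seq T) (P : pred T) (F : T -> nat) x i0 :
  i0 \in r -> P i0 -> \big[minn/x]_(i <- r | P i) F i <= F i0.
Proof.
elim: r => // a r IH; rewrite in_cons big_cons => /orP [/eqP <- -> | /IH H /H].
  exact: geq_minl.
by case: (P a) => // h; rewrite geq_min h orbT.
Qed.

Lemma tau5 : tau Hfam = 5.
Proof.
have cov0 : Defs.cover Hfam [set x in s0].
  apply/forallP => A; apply/implyP; rewrite Hfam_eq => /imsetP [t _ ->].
  move/allP: s0_cov => /(_ t (memTL t)) /hasP [x xt xs].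
  by apply/set0Pn; exists x; rewrite inE inFE xt inE xs.
have c0 : #|[set x in s0]| = 5 by rewrite cardsE; move/card_uniqP: s0_uniq ->.
apply/eqP; rewrite eqn_leq; apply/andP; split.
  rewrite /tau; apply: (@leq_trans #|[set x in s0]|); last by rewrite c0.
  by apply: bm => //; rewrite mem_index_enum.
rewrite /tau; apply: (big_ind (fun n => 5 <= n)).
- by rewrite card_prod !card_ord.
- by move=> m n hm hn; rewrite leq_min hm hn.
- move=> S cS; rewrite leqNgt; apply/negP => hS.
  by move: (@nocover S hS); rewrite cS.
Qed.

Theorem proposition5p9 :
  [/\ uniform 5 Hfam,
      intersecting Hfam,
      #|Hfam| = 75,
      (forall Y : {set Gr}, #|Y| = 4 -> 6 <= avoid_count Hfam Y)
    & tau Hfam = 5].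
Proof.
split.
- by move=> A; rewrite Hfam_eq => /imsetP [t _ ->]; exact: card_fH.
- move=> A B; rewrite Hfam_eq => /imsetP [t _ ->] /imsetP [t' _ ->].
  exact: inter_fH.
- by rewrite Hfam_eq card_imset ?card_prod ?card_ord //; exact: fH_inj.
- by move=> Y hY; rewrite avoidE; apply: cnt_le; rewrite -cardE hY.
- exact: tau5.
Qed.
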